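(* Let $X=\mathbb{CP}^2\#n\overline{\mathbb{CP}}^2$, $k$ a positive integer, $U_5=\{A\in H_2(X;\mathbb{Z}):\mathrm{ind}(A)\ge2k,\ A\cdot H>0\}$ with the preorder $\ge$ below. Every minimal element $A=aH-\sum_{i=1}^nb_iE_i$ of $U_5$ is reduced and satisfies $3a-\sum_{i=1}^nb_i\ge1$.
   Context: $K_0=-3H+E_1+\cdots+E_n$, $\mathrm{ind}(A):=A^2-K_0\cdot A$. With $H^2(X;\mathbb{R})\cong\mathbb{R}^{n+1}$ via $(x_0,\dots,x_n)\leftrightarrow x_0PD(H)-\sum x_iPD(E_i)$, the reduced cone $\mathcal{P}$ is: $0<x_1<x_0$ ($n=1$); $0<x_2\le x_1$, $x_1+x_2<x_0$ ($n=2$); $0<x_n\le\cdots\le x_1$, $x_1+x_2+x_3\le x_0$, $\sum x_i^2<x_0^2$ ($n\ge3$); and $\mathcal{P}^{c_1>0}=\{[\omega]\in\mathcal{P}:\omega(3H-\sum E_i)>0\}$. For $A,B\in U_5$, $A\ge B$ means $\omega(A)\ge\omega(B)$ for all $[\omega]\in\mathcal{P}^{c_1>0}$; $A$ is minimal if there is no other $B\in U_5$, $B\ne A$, with $A\ge B$. A class $aH-\sum b_iE_i$ is reduced if $a>0$, $b_1\ge b_2\ge\cdots\ge b_n\ge0$ and $a\ge b_1+b_2+b_3$. *)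

(* Defs.v *)
From HB Require Import structures.
From mathcomp Require Import all_boot all_order all_algebra.
From mathcomp Require Import reals.
Set Implicit Arguments. Unset Strict Implicit. Unset Printing Implicit Defensive.
Import Order.TTheory GRing.Theory Num.Theory.
Local Open Scope ring_scope.

(* X = CP^2 # n CPbar^2.  A vector indexed by 'I_n.+1 encodes coordinates
   (c_0, c_1, ..., c_n).  A homology class A : hcls n encodes
   A = c_0 H - sum_i c_i E_i, i.e. a = c_0, b_i = c_i.
   A real cohomology class x : {ffun 'I_n.+1 -> R} encodes
   x_0 PD(H) - sum_i x_i PD(E_i). *)
Definition hcls (n : nat) := {ffun 'I_n.+1 -> int}.

Definition co (T : nmodType) (n : nat) (f : {ffun 'I_n.+1 -> T}) (k : nat) : T :=
  if (k < n.+1)%N then f (inord k) else 0.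

(* intersection form: H^2 = 1, E_i^2 = -1, H.E_i = 0, E_i.E_j = 0 (i<>j) *)
Definition dot (n : nat) (A B : hcls n) : int :=
  co A 0 * co B 0 - \sum_(1 <= i < n.+1) co A i * co B i.

(* H and K_0 = -3H + E_1 + ... + E_n *)
Definition Hcls (n : nat) : hcls n := [ffun i : 'I_n.+1 => if val i == 0%N then 1 else 0].
Definition K0 (n : nat) : hcls n := [ffun i : 'I_n.+1 => if val i == 0%N then -3 else -1].
(* 3H - E_1 - ... - E_n  (= c_1 = -K_0) *)
Definition c1cls (n : nat) : hcls n := [ffun i : 'I_n.+1 => if val i == 0%N then 3 else 1].

Definition ind (n : nat) (A : hcls n) : int := dot A A - dot (K0 n) A.

Definition pairing (R : realType) (n : nat) (x : {ffun 'I_n.+1 -> R}) (A : hcls n) : R :=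
  co x 0 * (co A 0)%:~R - \sum_(1 <= i < n.+1) co x i * (co A i)%:~R.

Definition inP (R : realType) (n : nat) (x : {ffun 'I_n.+1 -> R}) : Prop :=
  if n == 1%N then 0 < co x 1 /\ co x 1 < co x 0
  else if n == 2%N then
    [/\ 0 < co x 2, co x 2 <= co x 1 & co x 1 + co x 2 < co x 0]
  else
    [/\ 0 < co x n,
        (forall i : nat, (1 <= i < n)%N -> co x i.+1 <= co x i),
        co x 1 + co x 2 + co x 3 <= co x 0
      & \sum_(1 <= i < n.+1) co x i ^+ 2 < co x 0 ^+ 2].

Definition inPc1 (R : realType) (n : nat) (x : {ffun 'I_n.+1 -> R}) : Prop :=
  inP x /\ 0 < pairing x (c1cls n).

Definition U5 (n k : nat) (A : hcls n) : Prop :=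
  (2 * k)%:Z <= ind A /\ 0 < dot A (Hcls n).

Definition cls_ge (R : realType) (n : nat) (A B : hcls n) : Prop :=
  forall x : {ffun 'I_n.+1 -> R}, inPc1 x -> pairing x B <= pairing x A.

Definition minimal_U5 (R : realType) (n k : nat) (A : hcls n) : Prop :=
  U5 k A /\ ~ (exists B : hcls n, [/\ U5 k B, B <> A & cls_ge R A B]).

Definition reduced (n : nat) (A : hcls n) : Prop :=
  [/\ 0 < co A 0,
      (forall i : nat, (1 <= i < n)%N -> co A i.+1 <= co A i),
      0 <= co A n
    & co A 1 + co A 2 + co A 3 <= co A 0].

(* Main.v *)
Require Import Defs.
From HB Require Import structures.
From mathcomp Require Import all_boot all_order all_algebra.
From mathcomp Require Import reals.
From mathcomp Require Import ring lra zify.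
Import Order.TTheory GRing.Theory Num.Theory.
Set Implicit Arguments. Unset Strict Implicit.
Local Open Scope ring_scope.

Definition mk (T : nmodType) (n : nat) (g : nat -> T) : {ffun 'I_n.+1 -> T} :=
  [ffun i : 'I_n.+1 => g (val i)].

Lemma coE (T : nmodType) n (g : nat -> T) k : (k < n.+1)%N -> co (mk n g) k = g k.
Proof. by move=> hk; rewrite /co hk /mk ffunE /= inordK. Qed.

Lemma co_out (T : nmodType) n (f : {ffun 'I_n.+1 -> T}) k : (n.+1 <= k)%N -> co f k = 0.
Proof. by move=> hk; rewrite /co ltnNge hk. Qed.

Lemma sum_upto (T : nmodType) m p q (F : nat -> T) :
  (m <= p)%N -> (p <= q)%N -> (forall j, (p <= j)%N -> F j = 0) ->
  \sum_(m <= j < q) F j = \sum_(m <= j < p) F j.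
Proof.
move=> hm hq hF; rewrite (big_cat_nat hm hq) /=.
suff -> : \sum_(p <= j < q) F j = 0 by rewrite addr0.
rewrite big_nat_cond big1 // => j /andP[/andP[h _] _]; exact: hF.
Qed.

Lemma sum_two (T : nmodType) m p i (F : nat -> T) :
  (m <= i)%N -> (i.+2 <= p)%N -> (forall j, j != i -> j != i.+1 -> F j = 0) ->
  \sum_(m <= j < p) F j = F i + F i.+1.
Proof.
move=> hm hp hF.
have hip : (i <= p)%N by lia.
rewrite (big_cat_nat hm hip) /= big_nat_cond big1 ?add0r; last first.
  move=> j /andP[/andP[_ h] _]; apply: hF; apply/eqP; lia.
rewrite big_ltn; last by lia.
rewrite big_ltn; last by lia.
rewrite addrA big_nat_cond big1 ?addr0 // => j /andP[/andP[h _] _]; apply: hF; apply/eqP; lia.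
Qed.

Definition d3 (T : pzRingType) (j : nat) : T := if (j <= 3)%N then 1 else 0.

Lemma sum3 (T : pzRingType) n (f : {ffun 'I_n.+1 -> T}) :
  \sum_(1 <= j < n.+1) co f j * d3 T j = co f 1 + co f 2 + co f 3.
Proof.
rewrite -(@sum_upto _ 1 n.+1 (maxn n.+1 4)) //; last 2 first.
- by rewrite leq_maxl.
- by move=> j hj; rewrite co_out // mul0r.
rewrite (@sum_upto _ 1 4 (maxn n.+1 4)) //; last 2 first.
- by rewrite leq_maxr.
- by move=> j hj; rewrite /d3 leqNgt hj mulr0.
by rewrite big_ltn // big_ltn // big_ltn // big_geq // /d3 /= !mulr1 addr0 addrA.
Qed.

Lemma coK0 n j : (1 <= j <= n)%N -> co (K0 n) j = -1.
Proof. by case/andP=> h1 h2; rewrite /co ltnS h2 ffunE /= inordK //; case: j h1 {h2}. Qed.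
Lemma coH n j : (1 <= j <= n)%N -> co (Hcls n) j = 0.
Proof. by case/andP=> h1 h2; rewrite /co ltnS h2 ffunE /= inordK //; case: j h1 {h2}. Qed.
Lemma coc1 n j : (1 <= j <= n)%N -> co (c1cls n) j = 1.
Proof. by case/andP=> h1 h2; rewrite /co ltnS h2 ffunE /= inordK //; case: j h1 {h2}. Qed.

Lemma indE n (A : hcls n) : ind A = co A 0 * co A 0 + 3 * co A 0
   - \sum_(1 <= j < n.+1) (co A j * co A j + co A j).
Proof.
rewrite /ind /dot.
have -> : co (K0 n) 0 = -3 by rewrite /co /= ffunE /= inordK.
have -> : \sum_(1 <= j < n.+1) co (K0 n) j * co A j = - \sum_(1 <= j < n.+1) co A j.
  by rewrite -sumrN; apply: eq_big_nat => j hj; rewrite coK0 // mulN1r.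
rewrite big_split /=; ring.
Qed.

Lemma dotH n (A : hcls n) : dot A (Hcls n) = co A 0.
Proof.
rewrite /dot.
have -> : co (Hcls n) 0 = 1 by rewrite /co /= ffunE /= inordK.
rewrite big_nat_cond big1 ?subr0 ?mulr1 // => j /andP[hj _]; rewrite coH ?mulr0 //; lia.
Qed.

Lemma pairc1 (R : realType) n (x : {ffun 'I_n.+1 -> R}) :
  pairing x (c1cls n) = co x 0 * 3 - \sum_(1 <= j < n.+1) co x j.
Proof.
rewrite /pairing.
have -> : co (c1cls n) 0 = 3 by rewrite /co /= ffunE /= inordK.
congr (_ - _); apply: eq_big_nat => j hj; rewrite coc1 // mulr1 //.
Qed.


Lemma inP_mono (R : realType) n (x : {ffun 'I_n.+1 -> R}) i : inP x -> (1 <= i < n)%N -> co x i.+1 <= co x i.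
Proof.
rewrite /inP; case: (n =P 1%N) => [e|ne1]; first lia.
case: (n =P 2%N) => [e|ne2].
  by move=> [_ h _] hi; have -> : i = 1%N by lia.
by case=> _ h _ _; apply: h.
Qed.

Lemma inP_last (R : realType) n (x : {ffun 'I_n.+1 -> R}) : inP x -> 0 < co x n.
Proof.
rewrite /inP; case: (n =P 1%N) => [e|ne1]; first by subst n => -[].
case: (n =P 2%N) => [e|ne2]; first by subst n => -[].
by case.
Qed.

Lemma inP_3 (R : realType) n (x : {ffun 'I_n.+1 -> R}) : inP x -> co x 1 + co x 2 + co x 3 <= co x 0.
Proof.
rewrite /inP; case: (n =P 1%N) => [e|ne1].
  subst n; move=> [_ h]; rewrite (@co_out _ _ _ 2) ?(@co_out _ _ _ 3) // !addr0; exact: ltW.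
case: (n =P 2%N) => [e|ne2].
  subst n; move=> [_ _ h]; rewrite (@co_out _ _ _ 3) // addr0; exact: ltW.
by case.
Qed.

Lemma inP_pos (R : realType) n (x : {ffun 'I_n.+1 -> R}) j : inP x -> (1 <= j <= n)%N -> 0 <= co x j.
Proof.
move=> hx hj; apply: le_trans (ltW (inP_last hx)) _.
have : forall m, (1 <= n - m)%N -> co x n <= co x (n - m).
  elim=> [|m IH] h; first by rewrite subn0.
  apply: le_trans (IH _) _; first lia.
  have -> : (n - m = (n - m.+1).+1)%N by lia.
  apply: inP_mono => //; lia.
move/(_ (n - j)%N); have -> : (n - (n - j) = j)%N by lia.
apply; lia.
Qed.

Lemma sum3Z n (f : {ffun 'I_n.+1 -> int}) :
  \sum_(1 <= j < n.+1) co f j * d3 int j = co f 1 + co f 2 + co f 3.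
Proof. exact: sum3. Qed.
Lemma sum3R (R : realType) n (f : {ffun 'I_n.+1 -> R}) :
  \sum_(1 <= j < n.+1) co f j * d3 R j = co f 1 + co f 2 + co f 3.
Proof. exact: sum3. Qed.

Theorem lemma4p4 (R : realType) (n k : nat) (A : hcls n) :
  (1 <= n)%N -> (0 < k)%N -> minimal_U5 R k A ->
  reduced A /\ 1 <= 3 * co A 0 - \sum_(1 <= i < n.+1) co A i.
Proof.
move=> n1 k0 [[hind hH] hmin].
have no : forall B : hcls n, ind A <= ind B -> 0 < dot B (Hcls n) -> B <> A ->
   (forall x : {ffun 'I_n.+1 -> R}, inPc1 x -> pairing x B <= pairing x A) -> False.
  move=> B h1 h2 h3 h4; apply: hmin; exists B; split => //; split => //.
  exact: le_trans hind h1.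
have ha : 0 < co A 0 by rewrite -(dotH A).
have hk : 2 <= ind A by move: hind; lia.
set SA := \sum_(1 <= j < n.+1) (co A j * co A j + co A j).
have hiA : ind A = co A 0 * co A 0 + 3 * co A 0 - SA by rewrite indE.
have hb0 : forall j, (1 <= j <= n)%N -> 0 <= co A j.
  move=> j hj; rewrite leNgt; apply/negP => hneg.
  pose g := fun m : nat => co A m + (if m == j then 1 else 0).
  have g0 : g 0%N = co A 0 by rewrite /g; case: eqP => [e|_]; [lia| rewrite addr0].
  apply: (no (mk n g)).
  - rewrite hiA indE coE // g0.
    suff : \sum_(1 <= j0 < n.+1) (co (mk n g) j0 * co (mk n g) j0 + co (mk n g) j0) <= SA by lia.
    apply: ler_sum_nat => i /andP[i1 i2]; rewrite coE // /g.
    case: eqP => [->|_]; [nia| by rewrite addr0].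
  - by rewrite dotH coE // g0.
  - move/(congr1 (fun C => co C j)) => /=; rewrite coE; last lia.
    rewrite /g eqxx; lia.
  - move=> x [xP _]; rewrite /pairing coE // g0 lerD2l lerN2.
    apply: ler_sum_nat => i /andP[i1 i2]; rewrite coE // /g.
    case: eqP => _; last by rewrite addr0.
    rewrite intrD mulrDr lerDl mulr_ge0 //; apply: (inP_pos xP); lia.
have hmono : forall i, (1 <= i < n)%N -> co A i.+1 <= co A i.
  move=> i hi; rewrite leNgt; apply/negP => hlt.
  set c := co A i.+1 - co A i.
  pose g := fun m : nat => co A m + c * ((if m == i then 1 else 0) - (if m == i.+1 then 1 else 0)).
  have gi : g i = co A i.+1 by rewrite /g eqxx (_ : (i == i.+1) = false); [rewrite /c; ring | lia].
  have gi1 : g i.+1 = co A i by rewrite /g eqxx (_ : (i.+1 == i) = false); [rewrite /c; ring | lia].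
  have gout : forall m, m != i -> m != i.+1 -> g m = co A m.
    by move=> m h1 h2; rewrite /g (negbTE h1) (negbTE h2) subrr mulr0 addr0.
  have g0 : g 0%N = co A 0 by apply: gout; lia.
  apply: (no (mk n g)).
  - rewrite hiA indE coE // g0.
    suff : \sum_(1 <= j0 < n.+1) (co (mk n g) j0 * co (mk n g) j0 + co (mk n g) j0) - SA = 0 by lia.
    rewrite /SA -sumrB (@sum_two _ _ _ i); first by rewrite !coE ?gi ?gi1; [ring|lia|lia].
    + lia.
    + lia.
    + by move=> m h1 h2; case: (ltnP m n.+1) => hm; [rewrite coE // gout // subrr | rewrite !co_out // subrr].
  - by rewrite dotH coE // g0.
  - move/(congr1 (fun C => co C i)); rewrite coE ?gi; lia.
  - move=> x [xP _]; rewrite /pairing coE // g0 lerD2l lerN2.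
    rewrite -subr_ge0 -sumrB (@sum_two _ _ _ i); [|lia|lia|]; last first.
      by move=> m h1 h2; case: (ltnP m n.+1) => hm; [rewrite coE // gout // subrr | rewrite !co_out // !mul0r subrr].
    rewrite !coE ?gi ?gi1; [|lia|lia].
    have h1 := inP_mono xP (i:=i) hi.
    have h2 : co A i < co A i.+1 by [].
    have h3 : (co A i)%:~R < (co A i.+1)%:~R :> R by rewrite ltr_int.
    nra.
have hs : co A 1 + co A 2 + co A 3 <= co A 0.
  rewrite leNgt; apply/negP => hlt.
  have hSA : 2 * (co A 1 + co A 2 + co A 3) <= SA.
    rewrite -sum3Z mulr_sumr; apply: ler_sum_nat => j hj; rewrite /d3.
    case: ifP => _; rewrite ?mulr1 ?mulr0; have [h|h] := lerP 1 (co A j); have [h'|h'] := lerP 0 (co A j); nia.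
  have [a1|a2] := lerP (co A 0) 1.
    have : co A 0 = 1 by lia.
    move=> e; move: hk; rewrite hiA e; lia.
  pose g := fun m : nat => co A m - d3 int m.
  have g0 : g 0%N = co A 0 - 1 by [].
  apply: (no (mk n g)).
  - rewrite hiA indE coE // g0.
    suff : \sum_(1 <= j0 < n.+1) (co (mk n g) j0 * co (mk n g) j0 + co (mk n g) j0)
       = SA - 2 * (co A 1 + co A 2 + co A 3) by lia.
    rewrite -sum3Z mulr_sumr /SA -sumrB; apply: eq_big_nat => j hj; rewrite coE; last by lia.
    rewrite /g /d3; case: ifP => _; ring.
  - by rewrite dotH coE // g0; lia.
  - move/(congr1 (fun C => co C 0)); rewrite coE // g0; lia.
  - move=> x [xP _]; rewrite /pairing coE // g0.
    have -> : \sum_(1 <= j0 < n.+1) co x j0 * (co (mk n g) j0)%:~R =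
        \sum_(1 <= j0 < n.+1) co x j0 * (co A j0)%:~R - \sum_(1 <= j0 < n.+1) co x j0 * d3 R j0.
      rewrite -sumrB; apply: eq_big_nat => j hj; rewrite coE; last by lia.
      rewrite /g /d3; case: ifP => _; rewrite intrB /=; ring.
    rewrite sum3R intrB; have := inP_3 xP; lra.
split.
  split; [exact: ha | exact: hmono | apply: hb0; lia | exact: hs].
rewrite leNgt; apply/negP => hlt.
set Sb := \sum_(1 <= i < n.+1) co A i.
have hSA : 2 * Sb <= SA.
  rewrite mulr_sumr; apply: ler_sum_nat => j hj; have [h|h] := lerP 0 (co A j); nia.
have [a3|a4] := lerP (co A 0) 3.
  move: hk; rewrite hiA; nia.
pose g := fun m : nat => co A m - (if m == 0%N then 3 else 1).
have g0 : g 0%N = co A 0 - 3 by [].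
apply: (no (mk n g)).
- rewrite hiA indE coE // g0.
  suff : \sum_(1 <= j0 < n.+1) (co (mk n g) j0 * co (mk n g) j0 + co (mk n g) j0)
     = SA - 2 * Sb by lia.
  rewrite mulr_sumr /SA -sumrB; apply: eq_big_nat => j /andP[j1 j2]; rewrite coE //.
  rewrite /g; case: j j1 {j2} => // j _ /=; ring.
- by rewrite dotH coE // g0; lia.
- move/(congr1 (fun C => co C 0)); rewrite coE // g0; lia.
- move=> x [xP hc]; rewrite /pairing coE // g0.
  have -> : \sum_(1 <= j0 < n.+1) co x j0 * (co (mk n g) j0)%:~R =
      \sum_(1 <= j0 < n.+1) co x j0 * (co A j0)%:~R - \sum_(1 <= j0 < n.+1) co x j0.
    rewrite -sumrB; apply: eq_big_nat => j /andP[j1 j2]; rewrite coE //.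
    rewrite /g; case: j j1 {j2} => // j _ /=; rewrite intrB /=; ring.
  move: hc; rewrite pairc1 intrB; lra.
Qed.
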